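(* For almost all $n$-variable Boolean functions $f$ it holds that for every $k$, $k\text{-}NN(f)>\frac{2^{n/2}}{n}$; that is, the fraction of Boolean functions $f:\{0,1\}^n\to\{0,1\}$ such that $k\text{-}NN(f)>2^{n/2}/n$ for all $k$ tends to $1$ as $n\to\infty$.
   Context: Let $f:\{0,1\}^n\to\{0,1\}$ and $k$ a positive integer. A $k$-nearest neighbor representation of $f$ is a pair of disjoint finite sets $(P,N)$ of points of $\mathbb R^n$ such that for every $a\in\{0,1\}^n$, the $k$ smallest Euclidean distances from $a$ to points of $P\cup N$ are all strictly smaller than the remaining $|P\cup N|-k$ distances, and $f(a)=1$ iff at least $k/2$ of the $k$ points of $P\cup N$ closest to $a$ belong to $P$. The size is $|P\cup N|$, and $k\text{-}NN(f)$ is the minimum size of a $k$-nearest neighbor representation of $f$. *)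

(* Defs.v *)
From HB Require Import structures.
From mathcomp Require Import all_boot all_order all_algebra.
From mathcomp Require Import finmap.
From mathcomp Require Import all_classical all_reals all_analysis.

Set Implicit Arguments.
Unset Strict Implicit.
Unset Printing Implicit Defensive.

Import Order.TTheory GRing.Theory Num.Theory.
Import numFieldNormedType.Exports.
Local Open Scope ring_scope.

Definition cube (n : nat) := {ffun 'I_n -> bool}.
Definition boolfun (n : nat) := {ffun cube n -> bool}.

Definition embed (R : realType) (n : nat) (a : cube n) : 'rV[R]_n :=
  \row_i ((a i : nat)%:R).

Definition edist (R : realType) (n : nat) (x y : 'rV[R]_n) : R :=
  Num.sqrt (\sum_(i < n) (x ord0 i - y ord0 i) ^+ 2).

(* (P, N) is a k-nearest-neighbour representation of f: P, N disjoint
   finite sets of points; for every a in {0,1}^n there is a set S of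
   exactly k points of P \cup N all strictly closer to a than every
   remaining point of P \cup N (so S is the set of the k nearest points),
   and f a = 1 iff at least k/2 of the points of S lie in P. *)
Definition is_kNN_rep (R : realType) (n k : nat) (f : boolfun n)
  (P N : {fset 'rV[R]_n}) : Prop :=
  [disjoint P & N]%fset /\
  forall a : cube n, exists S : {fset 'rV[R]_n},
    [/\ (S `<=` fsetU P N)%fset,
        #|` S|%fset = k,
        (forall x y, x \in S -> y \in fsetD (fsetU P N) S ->
            edist (embed R a) x < edist (embed R a) y)
      & f a = (k%:R / 2 <= (#|` fsetI S P|%fset)%:R :> R)].

(* k-NN(f): the minimum size |P \cup N| of a k-NN representation,
   as an extended real (infimum; +oo if there is no representation) *)
Definition kNN (R : realType) (n k : nat) (f : boolfun n) : \bar R :=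
  ereal_inf [set x : \bar R | exists P N : {fset 'rV[R]_n},
     is_kNN_rep k f P N /\ x = ((#|` fsetU P N|%fset)%:R)%:E].

Definition good_fraction (R : realType) (n : nat) : R :=
  (#|[set f : boolfun n |
      `[< forall k : nat, (0 < k)%N ->
            ((Num.sqrt (2 ^+ n) / n%:R : R)%:E < kNN R k f)%E >]]|)%:R
  / (2 ^ (2 ^ n))%:R.

(* Main.v *)
Require Import Defs.
From HB Require Import structures.
From mathcomp Require Import all_boot all_order all_algebra.
From mathcomp Require Import finmap.
From mathcomp Require Import all_classical all_reals all_analysis.
From mathcomp Require Import ring lra zify.
Import Order.TTheory GRing.Theory Num.Theory.
Import numFieldNormedType.Exports.
Local Open Scope classical_set_scope.
Local Open Scope ring_scope.
Set Implicit Arguments.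
Unset Strict Implicit.
Section Chow.
Variable (R : realType) (n : nat).
Implicit Types (a : cube n) (p q : 'rV[R]_n).

Definition sq a p : R := \sum_(l < n) (((a l : nat)%:R : R) - p ord0 l) ^+ 2.

Definition cmpv a p q : nat :=
  if sq a p < sq a q then 0%N else if sq a p == sq a q then 1%N else 2%N.

Lemma cmpvE a p q : (cmpv a p q)%:R = Num.sg (sq a p - sq a q) + 1 :> R.
Proof.
rewrite /cmpv; case: (ltgtP (sq a p) (sq a q)) => H.
- by rewrite ltr0_sg ?subr_lt0 // addNr.
- by rewrite gtr0_sg ?subr_gt0.
- by rewrite H subrr sgr0 add0r.
Qed.

Lemma cmpv_sym a p q : cmpv a q p = (2 - cmpv a p q)%N.
Proof.
rewrite /cmpv; case: (ltgtP (sq a p) (sq a q)) => H //;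
 try by rewrite ltNge (ltW H) /= eq_sym (gt_eqF H).
all: try by rewrite H ltxx eqxx.
Qed.

Lemma cmpv_refl a p : cmpv a p p = 1%N.
Proof. by rewrite /cmpv ltxx eqxx. Qed.

Lemma cmpv2 a p q : (cmpv a p q == 2%N) = (sq a q < sq a p).
Proof.
by rewrite /cmpv; case: (ltgtP (sq a p) (sq a q)) => H //.
Qed.

Lemma sq_affine p q : exists c (w : 'I_n -> R), forall a,
  sq a p - sq a q = c + \sum_(l < n) w l * (a l : nat)%:R.
Proof.
exists (\sum_(l<n) (p ord0 l ^+ 2 - q ord0 l ^+ 2)), (fun l => 2 * (q ord0 l - p ord0 l)).
move=> a; rewrite /sq -sumrB -big_split /=; apply: eq_bigr => l _; ring.
Qed.

Lemma sum_aff (d : cube n -> R) c (w : 'I_n -> R) :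
  \sum_a d a = 0 -> (forall l, \sum_a d a * (a l : nat)%:R = 0) ->
  \sum_a d a * (c + \sum_(l<n) w l * (a l : nat)%:R) = 0.
Proof.
move=> H0 H1.
under eq_bigr do rewrite mulrDr mulr_sumr.
rewrite big_split /= -mulr_suml H0 mul0r add0r exchange_big /= big1 // => l _.
under eq_bigr do rewrite mulrCA.
by rewrite -mulr_sumr H1 mulr0.
Qed.

Lemma sg_term (x y : R) : 0 <= (Num.sg x - Num.sg y) * x.
Proof.
case: (ltgtP x 0) => hx; case: (ltgtP y 0) => hy;
 rewrite ?(ltr0_sg hx) ?(gtr0_sg hx) ?(ltr0_sg hy) ?(gtr0_sg hy) ?hx ?hy ?sgr0; try lra.
Qed.

Lemma chow_half (L1 L2 : cube n -> R) c1 w1 :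
  (forall a, L1 a = c1 + \sum_(l<n) w1 l * (a l : nat)%:R) ->
  \sum_a Num.sg (L1 a) = \sum_a Num.sg (L2 a) ->
  (forall l, \sum_a Num.sg (L1 a) * (a l : nat)%:R = \sum_a Num.sg (L2 a) * (a l : nat)%:R) ->
  forall a, L1 a != 0 -> Num.sg (L1 a) = Num.sg (L2 a).
Proof.
move=> HL H0 H1.
have S0 : \sum_a (Num.sg (L1 a) - Num.sg (L2 a)) * L1 a = 0.
  transitivity (\sum_a (Num.sg (L1 a) - Num.sg (L2 a)) * (c1 + \sum_(l<n) w1 l * (a l : nat)%:R)).
    by apply: eq_bigr => a _; rewrite {2}HL.
  apply: sum_aff; first by rewrite sumrB H0 subrr.
  move=> l; under eq_bigr do rewrite mulrBl.
  by rewrite sumrB H1 subrr.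
move=> a nz.
have := @psumr_eq0P _ _ predT _ (fun i _ => sg_term (L1 i) (L2 i)) S0 a isT.
move/eqP; rewrite mulf_eq0 (negbTE nz) orbF subr_eq0.
by move/eqP.
Qed.

Lemma chow_sg (L1 L2 : cube n -> R) c1 w1 c2 w2 :
  (forall a, L1 a = c1 + \sum_(l<n) w1 l * (a l : nat)%:R) ->
  (forall a, L2 a = c2 + \sum_(l<n) w2 l * (a l : nat)%:R) ->
  \sum_a Num.sg (L1 a) = \sum_a Num.sg (L2 a) ->
  (forall l, \sum_a Num.sg (L1 a) * (a l : nat)%:R = \sum_a Num.sg (L2 a) * (a l : nat)%:R) ->
  forall a, Num.sg (L1 a) = Num.sg (L2 a).
Proof.
move=> HL1 HL2 H0 H1 a.
have [z1|nz1] := eqVneq (L1 a) 0; last exact: (chow_half HL1 H0 H1 nz1).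
have [z2|nz2] := eqVneq (L2 a) 0; first by rewrite z1 z2.
symmetry; apply: (chow_half HL2 _ _ nz2) => // l; by rewrite H1.
Qed.

Definition wgt a (o : option 'I_n) : nat := if o is Some l then nat_of_bool (a l) else 1%N.

Definition chow (u : cube n -> nat) : {ffun option 'I_n -> 'I_(2 * 2 ^ n).+1} :=
  [ffun o => inord (\sum_a u a * wgt a o)%N].

Lemma card_cube : #|{: cube n}| = (2 ^ n)%N.
Proof. by rewrite card_ffun card_bool card_ord. Qed.

Lemma chow_bound (u : cube n -> nat) o : (forall a, u a <= 2)%N ->
  (\sum_a u a * wgt a o < (2 * 2 ^ n).+1)%N.
Proof.
move=> Hu; rewrite ltnS.
apply: (@leq_trans (\sum_(a : cube n) 2)%N).
  apply: leq_sum => a _; rewrite -[2%N]muln1; apply: leq_mul => //.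
  by case: o => [l|] //=; case: (a l).
by rewrite sum_nat_const card_cube mulnC.
Qed.

Lemma cmpv_le2 a p q : (cmpv a p q <= 2)%N.
Proof. by rewrite /cmpv; case: ifP => //; case: ifP. Qed.

Lemma chow_cmp p1 q1 p2 q2 :
  chow (fun a => cmpv a p1 q1) = chow (fun a => cmpv a p2 q2) ->
  forall a, cmpv a p1 q1 = cmpv a p2 q2.
Proof.
move=> E.
have Eo : forall o, (\sum_a cmpv a p1 q1 * wgt a o = \sum_a cmpv a p2 q2 * wgt a o)%N.
  move=> o; move/ffunP: E => /(_ o); rewrite !ffunE => /(congr1 val).
  rewrite /= !inordK //; by apply: chow_bound => a; apply: cmpv_le2.
have Er : forall o, \sum_a Num.sg (sq a p1 - sq a q1) * (wgt a o)%:R =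
                    \sum_a Num.sg (sq a p2 - sq a q2) * (wgt a o)%:R :> R.
  move=> o; move: (congr1 (fun x => x%:R : R) (Eo o)).
  rewrite !natr_sum.
  under eq_bigr do rewrite natrM cmpvE mulrDl mul1r.
  under [in X in _ = X -> _]eq_bigr do rewrite natrM cmpvE mulrDl mul1r.
  by rewrite !big_split /= => /addIr.
have [c1 [w1 H1]] := sq_affine p1 q1.
have [c2 [w2 H2]] := sq_affine p2 q2.
move=> a; apply/eqP; rewrite -(eqr_nat R) !cmpvE; apply/eqP; congr (_ + _).
apply: (chow_sg H1 H2).
- by move: (Er None) => /=; under eq_bigr do rewrite mulr1; under [in X in _ = X -> _]eq_bigr do rewrite mulr1.
- by move=> l; exact: (Er (Some l)).
Qed.

End Chow.
Section Rep.
Variable (R : realType) (n : nat).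
Local Notation pt := 'rV[R]_n.

Lemma edist_sq (a : cube n) (x y : pt) :
  Defs.edist (embed R a) x < Defs.edist (embed R a) y -> sq a x < sq a y.
Proof.
rewrite /Defs.edist /embed.
have E : forall z : pt, \sum_(i < n) ((\row_i0 ((a i0 : nat)%:R : R)) ord0 i - z ord0 i) ^+ 2 = sq a z.
  by move=> z; apply: eq_bigr => i _; rewrite mxE.
rewrite !E => H; rewrite ltNge; apply/negP => /ler_wsqrtr; by rewrite leNgt H.
Qed.

Lemma count_fset (U A : {fset pt}) : (A `<=` U)%fset ->
  count (fun x => x \in A) U = #|` A|.
Proof.
move=> sub.
rewrite -size_filter; apply/perm_size/uniq_perm.
- exact: filter_uniq (fset_uniq U).
- exact: fset_uniq.
move=> x; rewrite mem_filter; apply/andP/idP => [[]//|xA]; split=> //; exact: (fsubsetP sub).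
Qed.

Lemma count_ord (M : nat) (e : seq pt) (Q : pred pt) : (size e <= M)%N ->
  #|[pred i : 'I_M | (i < size e)%N && Q (nth 0 e i)]| = count Q e.
Proof.
move=> hm.
rewrite -sum1_card -sum1_count (big_nth 0) big_mkord.
rewrite (big_ord_widen_cond M (fun i => Q (nth 0 e i)) (fun _ => 1%N) hm).
by apply: eq_bigl => i; rewrite inE andbC.
Qed.

Definition Fml (M k m : nat) (lab : {ffun 'I_M -> bool}) (cm : nat -> nat -> nat) : bool :=
  (k%:R / 2 <= (#|[pred i : 'I_M | [&& (i < m)%N, lab i &
      (#|[pred j : 'I_M | (j < m)%N && (cm i j == 2%N)]| < k)%N]]|)%:R :> R).

Definition labf M (U P : {fset pt}) : {ffun 'I_M -> bool} := [ffun i : 'I_M => nth 0 U i \in P].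
Definition cmpI (U : seq pt) a (i j : nat) := cmpv a (nth 0 U i) (nth 0 U j).

Lemma rep_formula M k f (P N : {fset pt}) : is_kNN_rep k f P N ->
  (#|` (P `|` N)%fset| <= M)%N ->
  forall a, f a = Fml k #|` (P `|` N)%fset| (labf M (P `|` N)%fset P) (cmpI (P `|` N)%fset a).
Proof.
move=> [_ Hrep] hM a.
have [S [SU cardS close ->]] := Hrep a.
move: SU close hM; set U := (P `|` N)%fset => SU close hM.
rewrite /Fml; congr (_ <= _%:R).
have key : forall i, (i < size U)%N ->
  (#|[pred j : 'I_M | (j < #|`U|)%N && (cmpI U a i j == 2%N)]| < k)%N = (nth 0 U i \in S).
  move=> i hi; set x := nth 0 U i.
  have xU : x \in U by apply: mem_nth.
  rewrite (@count_ord M U (fun y => cmpv a x y == 2%N)) // (eq_count (cmpv2 a x)).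
  case xS: (x \in S).
  - apply: (@leq_ltn_trans #|` (S `\ x)%fset|).
      rewrite -size_filter; apply: uniq_leq_size; first exact: filter_uniq (fset_uniq U).
      move=> y; rewrite mem_filter in_fsetD1 => /andP [hy yU].
      apply/andP; split; first by apply/eqP => yx; move: hy; rewrite yx ltxx.
      apply/negPn/negP => yS.
      have : sq a x < sq a y.
        apply: edist_sq; apply: close => //; by rewrite in_fsetD yS.
      by rewrite ltNge (ltW hy).
    by rewrite -cardS (cardfsD1 x S) xS.
  - apply/negbTE; rewrite -leqNgt -cardS -size_filter.
    apply: uniq_leq_size; first exact: fset_uniq.
    move=> y yS; rewrite mem_filter (fsubsetP SU _ yS) andbT.
    apply: edist_sq; apply: close => //; by rewrite in_fsetD xS.
transitivity #|[pred i : 'I_M | (i < size U)%N && (fun y => y \in (S `&` P)%fset) (nth 0 U i)]|.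
  rewrite count_ord // count_fset //.
  exact: fsubset_trans (fsubsetIl S P) SU.
apply: eq_card => i; rewrite !inE /labf ffunE.
case hi: (i < size U)%N => //=; by rewrite key // andbC.
Qed.

End Rep.
Local Notation T2 M := {p : 'I_M * 'I_M | (p.1 < p.2)%N}.
Local Notation codeT n M := ('I_M.+1 * 'I_M.+1 * {ffun 'I_M -> bool} *
   {ffun T2 M -> {ffun option 'I_n -> 'I_(2 * 2 ^ n).+1}})%type.

Section Code.
Variable (R : realType) (n M : nat).
Local Notation pt := 'rV[R]_n.

Definition encode (k : nat) (P N : {fset pt}) : codeT n M :=
  let U := (P `|` N)%fset in
  (inord k, inord #|`U|, labf M U P,
   [ffun p : T2 M => chow (fun a => cmpI U a (val p).1 (val p).2)]).

Lemma k_le_m k f (P N : {fset pt}) : is_kNN_rep k f P N -> (k <= #|` (P `|` N)%fset|)%N.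
Proof.
move=> [_ H]; have [S [SU <- _ _]] := H [ffun _ => false].
exact: fsubset_leq_card.
Qed.

Lemma Fml_ext k m (lab : {ffun 'I_M -> bool}) (cm1 cm2 : nat -> nat -> nat) :
  (forall i j : 'I_M, cm1 i j = cm2 i j) -> @Fml R M k m lab cm1 = @Fml R M k m lab cm2.
Proof.
move=> E; rewrite /Fml; congr (_ <= _%:R); apply: eq_card => i; rewrite !inE.
congr [&& _, _ & (_ < _)%N]; apply: eq_card => j; by rewrite !inE E.
Qed.

Lemma encode_inj k1 f1 (P1 N1 : {fset pt}) k2 f2 (P2 N2 : {fset pt}) :
  is_kNN_rep k1 f1 P1 N1 -> is_kNN_rep k2 f2 P2 N2 ->
  (#|` (P1 `|` N1)%fset| <= M)%N -> (#|` (P2 `|` N2)%fset| <= M)%N ->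
  encode k1 P1 N1 = encode k2 P2 N2 -> f1 = f2.
Proof.
move=> h1 h2 hm1 hm2 E.
have hk1 := k_le_m h1; have hk2 := k_le_m h2.
move: E; rewrite /encode => -[] Ek Em El Ep.
have Ek' : k1 = k2.
  by move/(congr1 val): Ek; rewrite /= !inordK // ltnS; apply: leq_trans; eassumption.
have Em' : #|` (P1 `|` N1)%fset| = #|` (P2 `|` N2)%fset|.
  by move/(congr1 val): Em; rewrite /= !inordK // ltnS.
have lt : forall a (i j : 'I_M), (i < j)%N ->
    cmpI (P1 `|` N1)%fset a i j = cmpI (P2 `|` N2)%fset a i j.
  move=> a i j hij.
  move/ffunP: Ep => /(_ (exist _ (i, j) hij)).
  rewrite !ffunE /= => /chow_cmp; apply.
have Ecm : forall a (i j : 'I_M),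
    cmpI (P1 `|` N1)%fset a i j = cmpI (P2 `|` N2)%fset a i j.
  move=> a i j; case: (ltngtP i j) => h.
  - by apply: lt.
  - rewrite /cmpI (cmpv_sym _ (nth 0 (P1 `|` N1)%fset j)) (cmpv_sym _ (nth 0 (P2 `|` N2)%fset j)).
    congr (2 - _)%N; exact: (lt a j i h).
  - have -> : i = j by apply: val_inj.
    by rewrite /cmpI !cmpv_refl.
apply/ffunP => a.
rewrite (rep_formula h1 hm1) (rep_formula h2 hm2) El Ek' Em'.
exact: Fml_ext.
Qed.

Lemma card_T2 : (2 * #|{: T2 M}| <= M * M)%N.
Proof.
rewrite card_sig.
set A := [set p : 'I_M * 'I_M | (p.1 < p.2)%N]%SET.
have -> : #|[pred x : 'I_M * 'I_M | (x.1 < x.2)%N]| = #|A|.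
  by apply: eq_card => p; rewrite !inE.
have inj : injective (fun p : 'I_M * 'I_M => (p.2, p.1)).
  by move=> [a b] [c d] /= [-> ->].
have : (#|A| <= #|~: A|)%N.
  rewrite -(card_imset A inj); apply: subset_leq_card.
  apply/fintype.subsetP => q /imsetP [p]; rewrite !inE => hp ->; rewrite /= -leqNgt ltnW //.
have := cardsC A; rewrite card_prod card_ord.
lia.
Qed.

Lemma card_codeT : #|{: codeT n M}| =
  (M.+1 * M.+1 * 2 ^ M * (((2 * 2 ^ n).+1) ^ n.+1) ^ #|{: T2 M}|)%N.
Proof. by rewrite !card_prod !card_ffun !card_ord card_bool (card_option _) card_ord. Qed.

End Code.
Definition Mx (n : nat) : nat := \max_(m < (2^n).+1 | (m * m * (n * n) <= 2 ^ n)%N) m.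

Lemma Mx_prop n : (Mx n * Mx n * (n * n) <= 2 ^ n)%N.
Proof.
rewrite /Mx; apply: (big_ind (fun x => x * x * (n * n) <= 2 ^ n)%N) => //.
by move=> x y hx hy; case: (leqP x y).
Qed.

Lemma Mx_ge n m : (0 < n)%N -> (m * m * (n * n) <= 2 ^ n)%N -> (m <= Mx n)%N.
Proof.
move=> hn h.
have hm : (m < (2^n).+1)%N.
  rewrite ltnS; apply: leq_trans h; case: m => // m; nia.
exact: (@leq_bigmax_cond _ (fun i : 'I_(2^n).+1 => (i * i * (n * n) <= 2 ^ n)%N) (fun i => nat_of_ord i) (Ordinal hm) h).
Qed.

Lemma bad_rep (R : realType) n (f : boolfun n) : (0 < n)%N ->
  ~ (forall k, (0 < k)%N -> ((Num.sqrt (2 ^+ n) / n%:R : R)%:E < kNN R k f)%E) ->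
  exists k (P N : {fset 'rV[R]_n}), is_kNN_rep k f P N /\ (#|` (P `|` N)%fset| <= Mx n)%N.
Proof.
move=> hn /existsNP [k /not_implyP [hk H]].
set t := (Num.sqrt (2 ^+ n) / n%:R : R).
have hle : (kNN R k f <= t%:E)%E by rewrite leNgt; apply/negP.
case: (pselect (exists (P N : {fset 'rV[R]_n}), is_kNN_rep k f P N)) => [ex|nex]; last first.
  exfalso; move: hle; rewrite /kNN.
  have -> : [set x : \bar R | exists P N : {fset 'rV[R]_n},
     is_kNN_rep k f P N /\ x = ((#|` (P `|` N)%fset|)%:R)%:E] = set0.
    apply/seteqP; split => x //= [P [N [hr _]]]; apply: nex; by exists P, N.
  by rewrite ereal_inf0 leNgt ltey.
have exQ : exists m, `[< exists P N : {fset 'rV[R]_n}, is_kNN_rep k f P N /\ #|` (P `|` N)%fset| = m >].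
  case: ex => P [N hr]; exists #|` (P `|` N)%fset|; apply/asboolP; by exists P, N.
case: (ex_minnP exQ) => m0 /asboolP [P [N [hr hc]]] hmin.
exists k, P, N; split => //.
have h0 : ((m0%:R : R)%:E <= kNN R k f)%E.
  apply/ereal_infP => y [P' [N' [hr' ->]]].
  rewrite lee_fin ler_nat; apply: hmin; apply/asboolP; by exists P', N'.
have h1 : (m0%:R : R) <= t by rewrite -lee_fin (le_trans h0 hle).
have hn' : (0 : R) < n%:R by rewrite ltr0n.
have h2 : (m0%:R : R) * n%:R <= Num.sqrt (2 ^+ n) by rewrite -ler_pdivlMr.
have h3 : ((m0%:R : R) * n%:R) * ((m0%:R : R) * n%:R) <= 2 ^+ n.
  have := ler_pM (mulr_ge0 (ler0n _ m0) (ler0n _ n)) (mulr_ge0 (ler0n _ m0) (ler0n _ n)) h2 h2.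
  move=> h; apply: (le_trans h); rewrite -expr2 sqr_sqrtr // exprn_ge0.
rewrite hc; apply: Mx_ge => //.
have : ((m0 * m0 * (n * n))%N%:R : R) <= (2 ^ n)%N%:R.
  rewrite natrX !natrM; apply: le_trans h3; rewrite le_eqVlt; apply/orP; left; apply/eqP; ring.
by rewrite ler_nat.
Qed.
Lemma exp_mono a b e : (a <= b)%N -> (a ^ e <= b ^ e)%N.
Proof. by move=> h; elim: e => // e IH; rewrite !expnS leq_mul. Qed.

Lemma pow_lin m : (16 * (3 * (m + 10) + 1) <= 3 * 2 ^ (m + 10))%N.
Proof. elim: m => [|m IH] //; rewrite addSn expnS; lia. Qed.

Lemma arith n M Y : (10 <= n)%N -> (M * M * (n * n) <= 2 ^ n)%N -> (2 * Y <= M * M)%N ->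
  ((M.+1 * M.+1 * 2 ^ M * (((2 * 2 ^ n).+1) ^ n.+1) ^ Y).+1 * 2 ^ n <= 2 ^ (2 ^ n))%N.
Proof.
move=> hn hMn hY.
have X1 : (1 <= 2 ^ n)%N by rewrite expn_gt0.
have h16 : (16 * M <= 2 ^ n)%N.
  apply: leq_trans hMn; have h : (16 <= n * n)%N by nia.
  have hm : (M <= M * M)%N by case: (posnP M) => [->|p] //; rewrite leq_pmulr.
  by rewrite mulnC; apply: leq_mul.
have hC : ((2 * 2 ^ n).+1 <= 2 ^ (n + 2))%N by rewrite expnD; lia.
have hM1 : (M.+1 <= 2 ^ n)%N by lia.
set Z := ((n + 2) * (n + 1) * Y)%N.
have hA : (M.+1 * M.+1 * 2 ^ M * (((2 * 2 ^ n).+1) ^ n.+1) ^ Y <= 2 ^ (n + n + M + Z))%N.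
  rewrite !expnD; apply: leq_mul; first by apply: leq_mul => //; apply: leq_mul.
  apply: (@leq_trans (((2 ^ (n + 2)) ^ n.+1) ^ Y)).
    exact: (exp_mono _ (exp_mono _ hC)).
  by rewrite -!expnM /Z addn1 mulnA.
have hZ : (4 * Z <= 3 * 2 ^ n)%N.
  have h1 : (4 * ((n + 2) * (n + 1)) <= 6 * (n * n))%N by nia.
  rewrite /Z mulnA; apply: (@leq_trans (6 * (n * n) * Y)).
    by rewrite leq_mul2r h1 orbT.
  have : (n * n * (2 * Y) <= n * n * (M * M))%N by rewrite leq_mul2l hY orbT.
  lia.
have hL : (16 * (3 * n + 1) <= 3 * 2 ^ n)%N.
  by have := pow_lin (n - 10); rewrite subnK.
have hE : (1 + (n + n + M + Z) + n <= 2 ^ n)%N by lia.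
have hc1 : (1 <= M.+1 * M.+1 * 2 ^ M * (((2 * 2 ^ n).+1) ^ n.+1) ^ Y)%N.
  by rewrite !muln_gt0 !expn_gt0.
apply: (@leq_trans (2 ^ (1 + (n + n + M + Z) + n))); last first.
  by apply: leq_pexp2l.
move: hA; rewrite !expnD expn1 => hA; apply: leq_mul => //; lia.
Qed.
Lemma card_bad (R : realType) n : (0 < n)%N ->
  (#|~: [set f : boolfun n | `[< forall k : nat, (0 < k)%N ->
        ((Num.sqrt (2 ^+ n) / n%:R : R)%:E < kNN R k f)%E >]]%SET| <=
   (#|{: codeT n (Mx n)}|).+1)%N.
Proof.
move=> hn.
set G := [set f : boolfun n | _]%SET.
pose Pc (f : boolfun n) (c : codeT n (Mx n)) := exists k (P N : {fset 'rV[R]_n}),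
  [/\ is_kNN_rep k f P N, (#|` (P `|` N)%fset| <= Mx n)%N & c = encode (Mx n) k P N].
pose g f := [pick c | `[< Pc f c >] ].
have spec : forall f, f \in ~: G -> exists c, g f = Some c /\ Pc f c.
  move=> f; rewrite !inE => /asboolPn hf; rewrite /g; case: pickP => [c /asboolP hc|none].
    by exists c.
  exfalso; have [k [P [N [hr hm]]]] := bad_rep hn hf.
  have := none (encode (Mx n) k P N); rewrite asboolT //; by exists k, P, N.
have inj : {in ~: G &, injective g}.
  move=> f1 f2 h1 h2 E.
  have [c1 [e1 [k1 [P1 [N1 [r1 m1 ec1]]]]]] := spec f1 h1.
  have [c2 [e2 [k2 [P2 [N2 [r2 m2 ec]]]]]] := spec f2 h2.
  move: E; rewrite e1 e2 => -[] E.
  exact: (encode_inj r1 r2 m1 m2 (etrans (esym ec1) (etrans E ec))).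
rewrite -(card_in_imset inj) -card_option; exact: max_card.
Qed.

Theorem theorem6 (R : realType) :
  good_fraction R @ \oo --> (1 : R).
Proof.
apply: (squeeze_cvgr (f := fun n : nat => 1 - (2^-1 : R) ^+ n) (h := fun _ : nat => 1 : R)).
- exists 10%N => // n /= hn.
  rewrite /good_fraction.
  set G := [set f : boolfun n | _]%SET.
  have hD : (#|G| + #|~: G| = 2 ^ (2 ^ n))%N by rewrite cardsC card_ffun card_bool card_cube.
  have hD0 : (0 : R) < (2 ^ (2 ^ n))%N%:R by rewrite ltr0n expn_gt0.
  have hb := card_bad R (leq_trans (isT : (0 < 10)%N) hn).
  rewrite -/G card_codeT in hb.
  have ha := arith hn (Mx_prop n) (card_T2 (Mx n)).
  have hB : (#|~: G| * 2 ^ n <= 2 ^ (2 ^ n))%N.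
    apply: leq_trans ha; rewrite leq_mul2r; apply/orP; right; exact: hb.
  apply/andP; split.
    have key : (#|~: G|%:R : R) <= (2^-1)^+n * (#|G|%:R + #|~: G|%:R).
      rewrite exprVn mulrC ler_pdivlMr ?exprn_gt0 // -natrD hD -natrX -natrM ler_nat.
      exact: hB.
    rewrite ler_pdivlMr // mulrBl mul1r -hD natrD; lra.
  rewrite ler_pdivrMr // mul1r ler_nat -hD; exact: leq_addr.
- rewrite -[X in _ --> X]subr0; apply: cvgB; first exact: cvg_cst.
  apply: cvg_expr; rewrite ger0_norm ?invr_ge0 // invf_lt1 //; lra.
- exact: cvg_cst.
Qed.
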